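(* Let $X$ be a spherically complete sequence class and $E$ a Banach space. Then $$\|(x_j)_{j=1}^\infty\|_{X^{\rm dual}(E)} := \sup_{(\varphi_j)_{j=1}^\infty\in B_{X(E')}}\sum_{j=1}^\infty|\varphi_j(x_j)|$$ is finite for every $(x_j)_{j=1}^\infty\in X^{\rm dual}(E)$ and defines a complete norm on $X^{\rm dual}(E)$; moreover $X^{\rm dual}(E)\subseteq \ell_\infty(E)$ with $\|(x_j)_{j=1}^\infty\|_\infty \le \|(x_j)_{j=1}^\infty\|_{X^{\rm dual}(E)}$ for all $(x_j)_{j=1}^\infty\in X^{\rm dual}(E)$.
   Context: Banach spaces are over $\mathbb{K}=\mathbb{R}$ or $\mathbb{C}$; $E'$ is the dual, $B_Z$ the closed unit ball. For $x\in E$, $j\in\mathbb{N}$, $x\cdot e_j$ is the sequence with $x$ in coordinate $j$ and $0$ elsewhere; $c_{00}(E)$ = finitely supported $E$-valued sequences; $\ell_\infty(E)$ = bounded sequences with sup norm. A sequence class is a rule $X$ assigning to each Banach space $E$ a Banach space $X(E)$ which is a linear subspace of $E^{\mathbb{N}}$ such that $c_{00}(E)\subseteq X(E)\subseteq\ell_\infty(E)$ with $\|\cdot\|_\infty\le\|\cdot\|_{X(E)}$, and $\|x\cdot e_j\|_{X(E)}=\|x\|$ for all $x,j$. $X$ is spherically complete if $(x_j)\in X(E)$ and $|\lambda_j|=1$ for all $j$ imply $(\lambda_jx_j)\in X(E)$ with the same norm. The dual of $X$ is the rule $X^{\rm dual}(E)=\{(x_j)_{j=1}^\infty\in E^{\mathbb{N}}: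 \sum_{j=1}^\infty\varphi_j(x_j)\text{ converges for every }(\varphi_j)_{j=1}^\infty\in X(E')\}$. *)

(* Defs.v *)
From HB Require Import structures.
From mathcomp Require Import all_boot all_order all_algebra.
From mathcomp Require Import complex.
From mathcomp Require Import all_classical all_reals all_analysis.



Unset Printing Implicit Defensive.

Import Order.TTheory GRing.Theory Num.Theory.
Import numFieldNormedType.Exports.

Local Open Scope classical_set_scope.
Local Open Scope ring_scope.

Definition scal (R : realType) (b : bool) : numFieldType :=
  if b then (R[i] : numFieldType) else (R : numFieldType).

Section Defs.
Context {K : numFieldType}.

(** [s] is the least upper bound of the set [A] of scalars (all norms and
    sums of absolute values below are (real) nonnegative elements of [K]). *)
Definition is_lub (A : set K) (s : K) : Prop :=
  (forall a, A a -> a <= s) /\ (forall t, (forall a, A a -> a <= t) -> s <= t).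

Definition c00 {E : normedModType K} : set (nat -> E) :=
  [set x | exists N, forall n, (N <= n)%N -> x n = 0].

Definition single {E : normedModType K} (x : E) (j : nat) : nat -> E :=
  fun n => if n == j then x else 0.

Definition banach_subspace {E : normedModType K}
    (S : set (nat -> E)) (N : (nat -> E) -> K) : Prop :=
  S (fun _ => 0) /\
  (forall x y, S x -> S y -> S (fun j => x j + y j)) /\
  (forall (a : K) x, S x -> S (fun j => a *: x j)) /\
  (forall x, S x -> 0 <= N x) /\
  (forall x, S x -> N x = 0 -> x = (fun _ => 0)) /\
  (forall x y, S x -> S y -> N (fun j => x j + y j) <= N x + N y) /\
  (forall (a : K) x, S x -> N (fun j => a *: x j) = `|a| * N x) /\
  (forall s : nat -> (nat -> E), (forall n, S (s n)) ->
     (forall e : K, 0 < e -> exists M, forall m n, (M <= m)%N -> (M <= n)%N ->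
          N (fun j => s m j - s n j) < e) ->
     exists2 y, S y & forall e : K, 0 < e -> exists M, forall n, (M <= n)%N ->
          N (fun j => s n j - y j) < e).

End Defs.

Definition seq_class_carrier (K : numFieldType) :=
  forall E : completeNormedModType K, set (nat -> E).
Definition seq_class_norm (K : numFieldType) :=
  forall E : completeNormedModType K, (nat -> E) -> K.

Definition is_sequence_class {K : numFieldType}
    (X : seq_class_carrier K) (Xn : seq_class_norm K) : Prop :=
  forall E : completeNormedModType K,
    [/\ banach_subspace (X E) (Xn E),
        c00 `<=` X E,
        (forall x, X E x -> forall j, `|x j| <= Xn E x) &
        (forall (x : E) (j : nat), Xn E (single x j) = `|x|)].

Definition spherically_complete {K : numFieldType}
    (X : seq_class_carrier K) (Xn : seq_class_norm K) : Prop :=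
  forall (E : completeNormedModType K) (x : nat -> E) (l : nat -> K),
    X E x -> (forall j, `|l j| = 1) ->
    X E (fun j => l j *: x j) /\ Xn E (fun j => l j *: x j) = Xn E x.

(** [(D, ev)] is (an isometric copy of) the dual [E'] of [E]: [ev d] is a
    linear functional on [E], [ev] is linear in [d], [`|d|] is the operator
    norm of [ev d], and every continuous linear functional on [E] is some
    [ev d]. *)
Definition is_dual {K : numFieldType} {E D : completeNormedModType K}
    (ev : D -> E -> K) : Prop :=
  [/\ (forall d (a : K) x y, ev d (a *: x + y) = a * ev d x + ev d y),
      (forall (a : K) d d' x, ev (a *: d + d') x = a * ev d x + ev d' x),
      (forall d, is_lub [set `|ev d x| | x in [set x : E | `|x| <= 1]] `|d|) &
      (forall f : E -> K, (forall (a : K) x y, f (a *: x + y) = a * f x + f y) ->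
         continuous f -> exists d, forall x, ev d x = f x)].

Section Dual.
Context {K : numFieldType} (X : seq_class_carrier K) (Xn : seq_class_norm K)
  {E D : completeNormedModType K} (ev : D -> E -> K).

Definition Xdual : set (nat -> E) :=
  [set x | forall phi : nat -> D, X D phi ->
     cvgn (series (fun j => ev (phi j) (x j)))].

Definition dual_sums (x : nat -> E) : set K :=
  [set limn (series (fun j => `|ev (phi j) (x j)|)) |
     phi in [set phi : nat -> D | X D phi /\ Xn D phi <= 1]].

(** [|| x ||_{X^dual(E)}] := sup of [dual_sums x] (and [0] if that sup
    does not exist; the theorem shows it always exists on [X^dual(E)]). *)
Definition dual_norm (x : nat -> E) : K :=
  match pselect (exists s, is_lub (dual_sums x) s) with
  | left h => projT1 (cid h)
  | right _ => 0
  end.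

End Dual.

(* Main.v *)
Require Import Defs.
From HB Require Import structures.
From mathcomp Require Import all_boot all_order all_algebra.
From mathcomp Require Import complex.
From mathcomp Require Import all_classical all_reals all_analysis.
From mathcomp Require Import ring lra.
Import Order.TTheory GRing.Theory Num.Theory.
Import numFieldNormedType.Exports.
Local Open Scope classical_set_scope.
Local Open Scope ring_scope.
Section RealHB.
Variables (R : realType) (V : zmodType) (sc : R -> V -> V).
Hypotheses (scDr : forall r x y, sc r (x + y) = sc r x + sc r y)
  (scDl : forall r s x, sc (r + s) x = sc r x + sc s x)
  (scA : forall r s x, sc r (sc s x) = sc (r * s) x)
  (sc1 : forall x, sc 1 x = x).
Variable p : V -> R.
Hypotheses (pD : forall x y, p (x + y) <= p x + p y)
  (pZ : forall r x, p (sc r x) = `|r| * p x).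

Lemma sc0 x : sc 0 x = 0.
Proof. by apply: (addrI (sc 0 x)); rewrite -scDl !addr0. Qed.
Lemma scr0 r : sc r 0 = 0.
Proof. by apply: (addrI (sc r 0)); rewrite -scDr !addr0. Qed.
Lemma scNr r x : sc (- r) x = - sc r x.
Proof. by apply: (addrI (sc r x)); rewrite -scDl !subrr sc0. Qed.
Lemma scrN r x : sc r (- x) = - sc r x.
Proof. by apply: (addrI (sc r x)); rewrite -scDr !subrr scr0. Qed.
Lemma scN1 x : sc (-1) x = - x.
Proof. by rewrite scNr sc1. Qed.
Lemma p0 : p 0 = 0.
Proof. by rewrite -(sc0 0) pZ normr0 mul0r. Qed.
Lemma pN x : p (- x) = p x.
Proof. by rewrite -scN1 pZ normrN normr1 mul1r. Qed.
Lemma p_ge0 x : 0 <= p x.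
Proof.
have := pD x (- x); rewrite subrr p0 pN => h.
by rewrite -(@pmulr_rge0 _ 2) // mulr2n mulrDl mul1r.
Qed.

Definition good (G : set (V * R)) :=
  [/\ forall x a b, G (x, a) -> G (x, b) -> a = b,
      forall x a y c, G (x, a) -> G (y, c) -> G (x + y, a + c),
      forall r x a, G (x, a) -> G (sc r x, r * a) &
      forall x a, G (x, a) -> a <= p x].

Variable x0 : V.
Definition Pg (G : set (V * R)) := good G /\ (G = set0 \/ G (x0, p x0)).

Lemma Pg_chain (F : set (set (V * R))) : F `<=` Pg -> total_on F subset ->
  Pg (\bigcup_(X in F) X).
Proof.
move=> FP Ftot.
have common : forall G1 G2 z1 z2, F G1 -> F G2 -> G1 z1 -> G2 z2 ->
    exists G, [/\ F G, G z1 & G z2].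
  move=> G1 G2 z1 z2 F1 F2 h1 h2; case: (Ftot _ _ F1 F2) => sub.
    by exists G2; split => //; apply: sub.
  by exists G1; split => //; apply: sub.
split; [split|].
- move=> x a b [G1 F1 h1] [G2 F2 h2].
  have [G [FG g1 g2]] := common _ _ _ _ F1 F2 h1 h2.
  by have [[fu _ _ _] _] := FP _ FG; exact: fu g1 g2.
- move=> x a y c [G1 F1 h1] [G2 F2 h2].
  have [G [FG g1 g2]] := common _ _ _ _ F1 F2 h1 h2.
  have [[_ ad _ _] _] := FP _ FG; exists G => //; exact: ad.
- move=> r x a [G1 F1 h1]; have [[_ _ sc' _] _] := FP _ F1.
  by exists G1 => //; exact: sc'.
- move=> x a [G1 F1 h1]; have [[_ _ _ dm] _] := FP _ F1; exact: dm.
case: (pselect (exists2 G, F G & G (x0, p x0))) => [[G FG hG]|nG].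
  by right; exists G.
left; apply/seteqP; split => // z [G FG hG].
have [_ [G0|hx]] := FP _ FG; first by rewrite G0 in hG.
by exfalso; apply: nG; exists G.
Qed.

Definition G0 : set (V * R) := [set z | exists r, z = (sc r x0, r * p x0)].

Lemma G0_good : good G0.
Proof.
split.
- move=> x a b [r [-> ->]] [s [e ->]].
  have [->|rs] := eqVneq r s; first by [].
  have hx : x0 = 0.
    have : sc (r - s) x0 = 0 by rewrite scDl scNr e subrr.
    move=> h; rewrite -(sc1 x0) -(@divff _ (r - s)) ?subr_eq0 //.
    by rewrite mulrC -scA h scr0.
  by rewrite hx p0 !mulr0.
- move=> x a y c [r [-> ->]] [s [-> ->]]; exists (r + s).
  by rewrite scDl mulrDl.
- move=> t x a [r [-> ->]]; exists (t * r); by rewrite scA mulrA.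
- move=> x a [r [-> ->]]; rewrite pZ; apply: ler_wpM2r; first exact: p_ge0.
  exact: ler_norm.
Qed.

Lemma real_HB : exists g : V -> R, [/\ (forall x y, g (x + y) = g x + g y),
  (forall r x, g (sc r x) = r * g x), (forall x, g x <= p x) & g x0 = p x0].
Proof.
have [A [[[fuA adA scA' dmA] A0] maxA]] := Zorn_bigcup Pg_chain.
have Ax0 : A (x0, p x0).
  case: A0 => // A0; exfalso; apply: (maxA G0).
    rewrite A0; split; first by [].
    by move=> /(_ (x0, p x0)); apply => //; exists 1; rewrite sc1 mul1r.
  by split; [exact: G0_good| right; exists 1; rewrite sc1 mul1r].
have A00 : A (0, 0) by have := scA' 0 _ _ Ax0; rewrite sc0 mul0r.
have AN m a : A (m, a) -> A (- m, - a).
  by move=> h; have := scA' (-1) _ _ h; rewrite scN1 mulN1r.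
have tot : forall v, exists a, A (v, a).
  move=> v; apply/not_existsP => nv.
  pose S := [set t | exists m a, A (m, a) /\ t = a - p (m - v)].
  have S0 : S !=set0 by exists (0 - p (0 - v)), 0, 0.
  have Sub : forall m' a', A (m', a') -> ubound S (p (m' + v) - a').
    move=> m' a' h' _ [m [a [h ->]]].
    rewrite lerBrDr addrAC lerBlDr.
    apply: (le_trans (dmA _ _ (adA _ _ _ _ h h'))).
    rewrite (_ : m + m' = (m - v) + (m' + v)); first by rewrite addrC pD.
    by rewrite addrACA addNr addr0.
  have Shas : has_sup S by split => //; exists (p (0 + v) - 0); exact: Sub.
  pose c := sup S.
  have c_lb : forall m a, A (m, a) -> a - p (m - v) <= c.
    by move=> m a h; apply: sup_upper_bound => //; exists m, a.
  have c_ub : forall m a, A (m, a) -> c <= p (m + v) - a.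
    by move=> m a h; apply: ge_sup => //; exact: Sub.
  pose B := [set z | exists m a t, A (m, a) /\ z = (m + sc t v, a + t * c)].
  apply: (maxA B); last first.
    split; last by right; exists x0, (p x0), 0; rewrite sc0 mul0r !addr0.
    split.
    - move=> x a b [m [a1 [t [h1 [-> ->]]]]] [m2 [a2 [t2 [h2 [e ->]]]]].
      have [tt|tt] := eqVneq t t2.
        move: e; rewrite tt => /addIr em; rewrite em in h1.
        by rewrite (fuA _ _ _ h1 h2).
      exfalso; apply: (nv ((t - t2)^-1 * (a2 - a1))).
      have e2 : sc t v - sc t2 v = m2 - m.
        by rewrite -(addKr m (sc t v)) e addrA addrK addrC.
      have -> : v = sc ((t - t2)^-1) (m2 - m).
        rewrite -[in LHS](sc1 v) -(@mulVf _ (t - t2)) ?subr_eq0 //.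
        by rewrite -scA scDl scNr e2.
      by apply: scA'; apply: adA => //; apply: AN.
    - move=> x a y c' [m [a1 [t [h1 [-> ->]]]]] [m2 [a2 [t2 [h2 [-> ->]]]]].
      exists (m + m2), (a1 + a2), (t + t2); split; first exact: adA.
      by rewrite scDl mulrDl; congr (_, _); rewrite -!addrA; congr (_ + _);
        rewrite addrCA.
    - move=> r x a [m [a1 [t [h1 [-> ->]]]]].
      exists (sc r m), (r * a1), (r * t); split; first exact: scA'.
      by rewrite scDr scA mulrDr mulrA.
    - move=> x a [m [a1 [t [h1 [-> ->]]]]].
      have [t0|t0|->] := ltgtP t 0; last first.
      + by rewrite sc0 mul0r !addr0; exact: dmA.
      + have h := c_ub _ _ (scA' (t^-1) _ _ h1).
        have e : m + sc t v = sc t (sc t^-1 m + v).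
          by rewrite scDr scA mulfV ?gt_eqF // sc1.
        rewrite e pZ gtr0_norm //.
        have : t * c <= t * (p (sc t^-1 m + v) - t^-1 * a1).
          by rewrite ler_pM2l.
        rewrite mulrBr mulrA mulfV ?gt_eqF // mul1r => h'.
        by rewrite addrC -lerBrDr.
      + pose s := - t.
        have s0 : 0 < s by rewrite /s oppr_gt0.
        have h := c_lb _ _ (scA' (s^-1) _ _ h1).
        have e : m + sc t v = sc s (sc s^-1 m - v).
          by rewrite scDr scA mulfV ?gt_eqF // sc1 scrN /s scNr opprK.
        rewrite e pZ gtr0_norm //.
        have : s * (s^-1 * a1 - p (sc s^-1 m - v)) <= s * c.
          by rewrite ler_pM2l.
        rewrite mulrBr mulrA mulfV ?gt_eqF // mul1r /s mulNr => h'.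
        lra.
  split.
    move=> [m a] h; exists m, a, 0; split => //.
    by rewrite sc0 mul0r !addr0.
  move=> sub; apply: (nv c); apply: sub; exists 0, 0, 1.
  by rewrite sc1 add0r mul1r add0r.
pose g v := sval (cid (tot v)).
have Ag v : A (v, g v) by rewrite /g; case: cid.
exists g; split.
- by move=> x y; apply: (fuA _ _ _ (Ag _)); apply: adA.
- by move=> r x; apply: (fuA _ _ _ (Ag _)); apply: scA'.
- by move=> x; apply: dmA.
- exact: (fuA _ _ _ (Ag _) Ax0).
Qed.

End RealHB.
Lemma seq_cauchy_cvg {F : numFieldType} {V : completeNormedModType F}
  (u : nat -> V) :
  (forall e : F, 0 < e -> exists N, forall n, (N <= n)%N -> `|u N - u n| < e) ->
  cvgn u.
Proof.
move=> h; apply/cauchy_cvgP/cauchy_exP => e e0.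
have [N HN] := h e e0; exists (u N); exists N => // n Nn /=.
by rewrite -ball_normE /ball_ /=; exact: HN.
Qed.

Section Gen.
Variables (R : realType) (K : numFieldType) (emb : {rmorphism R -> K}).
Hypothesis lee : forall r s : R, (emb r <= emb s) = (r <= s).
Variable nR : K -> R.
Hypothesis normE : forall z : K, `|z| = emb (nR z).
Hypothesis embN : forall r : R, `|emb r| = emb `|r|.

Lemma emb_inj : injective emb.
Proof. by move=> r s e; apply/le_anti; rewrite -!lee e lexx. Qed.
Lemma lte r s : (emb r < emb s) = (r < s).
Proof. by rewrite !lt_def (inj_eq emb_inj) lee. Qed.
Lemma nR_ge0 z : 0 <= nR z.
Proof. by rewrite -lee rmorph0 -normE. Qed.
Lemma nR_emb r : nR (emb r) = `|r|.
Proof. by apply: emb_inj; rewrite -normE embN. Qed.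
Lemma nR_norm z : nR `|z| = nR z.
Proof. by rewrite normE nR_emb ger0_norm // nR_ge0. Qed.
Lemma nRM z w : nR (z * w) = nR z * nR w.
Proof. by apply: emb_inj; rewrite rmorphM -!normE normrM. Qed.
Lemma nRD z w : nR (z + w) <= nR z + nR w.
Proof. by rewrite -lee rmorphD -!normE ler_normD. Qed.
Lemma nRN z : nR (- z) = nR z.
Proof. by apply: emb_inj; rewrite -!normE normrN. Qed.
Lemma nR0 : nR 0 = 0.
Proof. by rewrite -(rmorph0 emb) nR_emb normr0. Qed.
Lemma nR1 : nR 1 = 1.
Proof. by rewrite -(rmorph1 emb) nR_emb normr1. Qed.
Lemma nR_eq0 z : nR z = 0 -> z = 0.
Proof. by move=> h; apply/normr0_eq0; rewrite normE h rmorph0. Qed.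
Lemma nRB z w : nR (z - w) = nR (w - z).
Proof. by rewrite -nRN opprB. Qed.
Lemma ge0_emb {z} : 0 <= z -> z = emb (nR z).
Proof. by move=> h; rewrite -normE ger0_norm. Qed.
Lemma nR_le z w : (`|z| <= `|w|) = (nR z <= nR w).
Proof. by rewrite !normE lee. Qed.
Lemma nR_lt z w : (`|z| < `|w|) = (nR z < nR w).
Proof. by rewrite !normE lte. Qed.
Lemma nR_ler z (r : R) : (`|z| <= emb r) = (nR z <= r).
Proof. by rewrite normE lee. Qed.
Lemma nR_ltr z (r : R) : (`|z| < emb r) = (nR z < r).
Proof. by rewrite normE lte. Qed.
Lemma emb_ge0 r : (0 <= emb r) = (0 <= r).
Proof. by rewrite -(rmorph0 emb) lee. Qed.
Lemma emb_gt0 r : (0 < emb r) = (0 < r).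
Proof. by rewrite -(rmorph0 emb) lte. Qed.
Lemma nR_gt0 {z} : 0 < z -> 0 < nR z.
Proof. by move=> h; rewrite -emb_gt0 -ge0_emb // ltW. Qed.

Lemma cvgVP {V : normedModType K} (u : nat -> V) l :
  u @ \oo --> l <-> forall e : R, 0 < e -> \forall n \near \oo, nR `|l - u n| < e.
Proof.
rewrite cvgrPdist_lt; split => h e e0.
  have e0' : 0 < emb e by rewrite emb_gt0.
  by apply: filterS (h _ e0') => n; rewrite -nR_ltr normr_id.
move: (h _ (nR_gt0 e0)); apply: filterS => n.
by rewrite -nR_ltr normr_id -ge0_emb // ltW.
Qed.

Lemma cvgKP (u : nat -> K) l :
  u @ \oo --> l <-> forall e : R, 0 < e -> \forall n \near \oo, nR (l - u n) < e.
Proof.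
rewrite cvgVP; split => h e e0; apply: filterS (h _ e0) => n;
by rewrite nR_norm.
Qed.

Lemma emb_cvg {u : nat -> R} {l} : u @ \oo --> l -> (emb \o u) @ \oo --> emb l.
Proof.
move/cvgrPdist_lt => h; apply/cvgKP => e e0.
by apply: filterS (h _ e0) => n /=; rewrite -rmorphB nR_emb.
Qed.

Lemma emb_cvg_inv {u : nat -> R} {L} : (emb \o u) @ \oo --> L ->
  exists l, u @ \oo --> l /\ L = emb l.
Proof.
move=> h.
have cu : cvgn u.
  apply: seq_cauchy_cvg => e e0.
  have /cvgKP/(_ (e / 2)) := h; rewrite divr_gt0 // => /(_ isT) [N _ HN].
  exists N => n Nn.
  have h1 := HN _ (leqnn N); have h2 := HN _ Nn.
  rewrite -nR_emb rmorphB.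
  rewrite (_ : emb (u N) - emb (u n) = (L - emb (u n)) - (L - emb (u N))); last first.
    by rewrite opprB [RHS]addrC addrA subrK.
  apply: (le_lt_trans (nRD _ _)); rewrite nRN /= in h1 h2 *.
  by rewrite (splitr e) ltrD.
exists (limn u); split => //.
by apply: (cvg_unique (@norm_hausdorff _ _) h); apply: emb_cvg; exact: cu.
Qed.

Lemma emb_series (f : nat -> R) :
  series (emb \o f) = emb \o series f.
Proof.
by apply/funext => n; rewrite /series /= rmorph_sum.
Qed.

Lemma small_inv (e : R) : 0 < e -> exists k : nat, (k.+1%:R : R)^-1 < e.
Proof.
move=> e0; exists (Num.trunc (e^-1)).
have := truncnS_gt (e^-1); set m := _.+1%:R => h.
have m0 : 0 < m by rewrite /m ltr0n.
move: h; rewrite -[e^-1]mulr1 ltr_pdivrMl // => h.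
by rewrite -div1r ltr_pdivrMr // mulrC.
Qed.

Section BS.
Context {D : normedModType K} {S : set (nat -> D)} {N : (nat -> D) -> K}.
Hypothesis bs : banach_subspace S N.

Lemma bs_S0 : S (fun _ => 0). Proof. by case: bs. Qed.
Lemma bs_SD {f g} : S f -> S g -> S (fun j => f j + g j).
Proof. by case: bs => _ [h _]; exact: h. Qed.
Lemma bs_SZ a {f} : S f -> S (fun j => a *: f j).
Proof. by case: bs => _ [_ [h _]]; exact: h. Qed.
Lemma bs_N0 {f} : S f -> 0 <= N f.
Proof. by case: bs => _ [_ [_ [h _]]]; exact: h. Qed.
Lemma bs_Ndef {f} : S f -> N f = 0 -> f = (fun _ => 0).
Proof. by case: bs => _ [_ [_ [_ [h _]]]]; exact: h. Qed.
Lemma bs_ND {f g} : S f -> S g -> N (fun j => f j + g j) <= N f + N g.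
Proof. by case: bs => _ [_ [_ [_ [_ [h _]]]]]; exact: h. Qed.
Lemma bs_NZ a {f} : S f -> N (fun j => a *: f j) = `|a| * N f.
Proof. by case: bs => _ [_ [_ [_ [_ [_ [h _]]]]]]; exact: h. Qed.
Lemma bs_comp (s : nat -> (nat -> D)) : (forall n, S (s n)) ->
     (forall e : K, 0 < e -> exists M, forall m n, (M <= m)%N -> (M <= n)%N ->
          N (fun j => s m j - s n j) < e) ->
     exists2 y, S y & forall e : K, 0 < e -> exists M, forall n, (M <= n)%N ->
          N (fun j => s n j - y j) < e.
Proof. by case: bs => _ [_ [_ [_ [_ [_ [_ h]]]]]]; exact: h. Qed.

Lemma bs_NS0 : N (fun _ => 0) = 0.
Proof.
have := bs_NZ 0 bs_S0; rewrite normr0 mul0r => <-.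
by congr N; apply/funext => j; rewrite scale0r.
Qed.
Lemma bs_SN {f} : S f -> S (fun j => - f j).
Proof.
move=> Sf; have := bs_SZ (-1) Sf.
by congr S; apply/funext => j; rewrite scaleN1r.
Qed.
Lemma bs_SB {f g} : S f -> S g -> S (fun j => f j - g j).
Proof. by move=> Sf Sg; apply: bs_SD => //; exact: bs_SN. Qed.
Lemma bs_Nemb {f} : S f -> N f = emb (nR (N f)).
Proof. by move=> Sf; apply: ge0_emb; exact: bs_N0. Qed.
Lemma bs_NN {f} : S f -> N (fun j => - f j) = N f.
Proof.
move=> Sf; have := bs_NZ (-1) Sf; rewrite normrN normr1 mul1r => <-.
by congr N; apply/funext => j; rewrite scaleN1r.
Qed.
Lemma bs_sym {f g} : S f -> S g -> N (fun j => f j - g j) = N (fun j => g j - f j).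
Proof.
move=> Sf Sg; rewrite -bs_NN; last exact: bs_SB.
by congr N; apply/funext => j; rewrite opprB.
Qed.
Lemma bs_tri {f g h} : S f -> S g -> S h ->
  nR (N (fun j => f j - g j)) <=
  nR (N (fun j => f j - h j)) + nR (N (fun j => h j - g j)).
Proof.
move=> Sf Sg Sh; rewrite -lee rmorphD -(bs_Nemb (bs_SB Sf Sg)).
rewrite -(bs_Nemb (bs_SB Sf Sh)) -(bs_Nemb (bs_SB Sh Sg)).
have := bs_ND (bs_SB Sf Sh) (bs_SB Sh Sg).
by congr (N _ <= _); apply/funext => j; rewrite addrA subrK.
Qed.
Lemma bs_symR {f g} : S f -> S g ->
  nR (N (fun j => f j - g j)) = nR (N (fun j => g j - f j)).
Proof. by move=> Sf Sg; rewrite bs_sym. Qed.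
Lemma bs_NembZ (t : R) {f} : S f -> nR (N (fun j => emb t *: f j)) = `|t| * nR (N f).
Proof. by move=> Sf; rewrite bs_NZ // nRM nR_norm nR_emb. Qed.

Lemma UB (p : nat -> (nat -> D) -> R) (c : nat -> R) :
  (forall n f g, S f -> S g -> p n (fun j => f j + g j) <= p n f + p n g) ->
  (forall n f, S f -> p n (fun j => - f j) = p n f) ->
  (forall n (t : R) f, S f -> p n (fun j => emb t *: f j) = `|t| * p n f) ->
  (forall n f, S f -> p n f <= c n * nR (N f)) ->
  (forall f, S f -> exists M, forall n, p n f <= M) ->
  exists C, forall f, S f -> nR (N f) <= 1 -> forall n, p n f <= C.
Proof.
move=> pD pN pZ pc pb.
apply: contrapT => nC.
have unb C : exists f n, [/\ S f, nR (N f) <= 1 & C < p n f].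
  apply: contrapT => h; apply: nC; exists C => f Sf nf n.
  rewrite leNgt; apply/negP => lt; apply: h; by exists f, n.
pose sub (f g : nat -> D) := fun j => f j - g j.
pose nu f := nR (N f).
have L1 a rho K0 : S a -> 0 < rho -> exists y n,
    [/\ S y, nu (sub y a) <= rho & K0 < p n y].
  move=> Sa r0; have [Ma hMa] := pb a Sa.
  have [f [n [Sf nf hf]]] := unb ((K0 + Ma) / rho).
  pose psi := fun j => emb rho *: f j.
  have Spsi : S psi by exact: bs_SZ.
  pose y := fun j => a j + psi j.
  have Sy : S y by exact: bs_SD.
  have eya : sub y a = psi by apply/funext => j; rewrite /sub /y addrC addKr.
  exists y, n; split => //.
    by rewrite /nu eya bs_NembZ // gtr0_norm // ler_piMr // ltW.
  have h1 : p n psi <= p n y + p n a.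
    rewrite -(pN n a Sa); have := pD n y _ Sy (bs_SN Sa).
    by congr (_ <= _); congr (p n); apply/funext => j; rewrite /y addrC addKr.
  have h2 : p n psi = rho * p n f by rewrite pZ // gtr0_norm.
  have h3 := hMa n.
  move: hf; rewrite ltr_pdivrMr // => hf.
  rewrite h2 in h1; rewrite mulrC in hf; lra.
have step a r k : S a -> 0 < r -> exists a' r', [/\ S a', 0 < r',
    r' <= r / 2 /\ r' <= (k.+1%:R)^-1, nu (sub a' a) <= r / 2 &
    exists n, forall z, S z -> nu (sub z a') <= 2 * r' -> k%:R < p n z].
  move=> Sa r0.
  have r20 : 0 < r / 2 by rewrite divr_gt0.
  have [y [n [Sy hya hy]]] := L1 a (r / 2) (k.+1%:R) Sa r20.
  pose delta := (2 * (`|c n| + 1))^-1.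
  have d0 : 0 < delta by rewrite invr_gt0 mulr_gt0 // ltr_pwDr // normr_ge0.
  pose r' := Num.min (r / 2) (Num.min delta (k.+1%:R)^-1).
  have r'0 : 0 < r' by rewrite !lt_min r20 d0 invr_gt0 ltr0n.
  have r'r : r' <= r / 2 by rewrite ge_min lexx.
  have r'd : r' <= delta by rewrite !ge_min lexx /= ?orbT.
  have r'k : r' <= (k.+1%:R)^-1 by rewrite !ge_min lexx /= ?orbT.
  exists y, r'; split => //.
  exists n => z Sz hz.
  have ey : y = (fun j => z j + sub y z j).
    by apply/funext => j; rewrite /sub addrCA subrr addr0.
  have h1 : p n y <= p n z + p n (sub y z).
    by rewrite {1}ey; apply: pD => //; exact: bs_SB.
  have h2 := pc n _ (bs_SB Sy Sz).
  have h3 : nu (sub y z) <= 2 * r' by rewrite /nu /sub bs_symR.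
  have nu0 : 0 <= nu (sub y z) by exact: nR_ge0.
  have h4 : c n * nu (sub y z) <= `|c n| * nu (sub y z).
    by apply: ler_wpM2r => //; exact: ler_norm.
  have h5 : `|c n| * nu (sub y z) <= `|c n| * (2 * r').
    by apply: ler_wpM2l => //; exact: normr_ge0.
  have h6 : `|c n| * (2 * r') < 1.
    have e1 : 2 * delta * (`|c n| + 1) = 1.
      by rewrite /delta mulrAC mulfV // gt_eqF // mulr_gt0 //
        ltr_pwDr // normr_ge0.
    have : `|c n| * (2 * r') <= `|c n| * (2 * delta).
      by apply: ler_wpM2l; [exact: normr_ge0|lra].
    have := normr_ge0 (c n); nra.
  rewrite /nu in h3 h4 h5; lra.
have st : forall ark : ((nat -> D) * R) * nat, exists ar' : (nat -> D) * R,
    S ark.1.1 -> 0 < ark.1.2 -> [/\ S ar'.1, 0 < ar'.2,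
    ar'.2 <= ark.1.2 / 2 /\ ar'.2 <= (ark.2.+1%:R)^-1,
    nu (sub ar'.1 ark.1.1) <= ark.1.2 / 2 &
    exists n, forall z, S z -> nu (sub z ar'.1) <= 2 * ar'.2 -> ark.2%:R < p n z].
  move=> [[a r] k] /=.
  case: (pselect (S a /\ 0 < r)) => [[Sa r0]|nh].
    by have [a' [r' h]] := step a r k Sa r0; exists (a', r').
  by exists (a, r) => Sa r0; exfalso; apply: nh.
have [F hF] := choice st.
pose A := fix A (k : nat) : (nat -> D) * R :=
  match k with 0 => ((fun _ => 0), 1) | k'.+1 => F (A k', k') end.
have inv k : S (A k).1 /\ 0 < (A k).2.
  elim: k => [|k [Sk rk]]; first by split => //; exact: bs_S0.
  by have [] := hF (A k, k) Sk rk.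
have hk k := hF (A k, k) (inv k).1 (inv k).2.
have AS k : A k.+1 = F (A k, k) by [].
have rdec k : (A k.+1).2 <= (A k).2 / 2.
  by have [_ _ [h _] _ _] := hk k; rewrite AS.
have rinv k : (A k.+1).2 <= (k.+1%:R)^-1.
  by have [_ _ [_ h] _ _] := hk k; rewrite AS.
have rpos k : 0 < (A k).2 := (inv k).2.
have Sa k : S (A k).1 := (inv k).1.
have astep k : nu (sub (A k.+1).1 (A k).1) <= (A k).2 / 2.
  by have [_ _ _ h _] := hk k; rewrite AS.
have ball k : exists n, forall z, S z -> nu (sub z (A k.+1).1) <= 2 * (A k.+1).2 ->
    k%:R < p n z.
  by have [_ _ _ _ h] := hk k; rewrite AS.
have nest k d : nu (sub (A (k + d)%N).1 (A k).1) <= (A k).2 - (A (k + d)%N).2.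
  elim: d => [|d IH].
    rewrite addn0 subrr /nu /sub.
    rewrite (_ : (fun j => _) = fun _ => 0) ?bs_NS0 ?nR0 //.
    by apply/funext => j; rewrite subrr.
  rewrite addnS; apply: le_trans (bs_tri (Sa _) (Sa _) (Sa (k + d)%N)) _.
  have := astep (k + d)%N; have := rdec (k + d)%N.
  rewrite /nu /sub in IH *; lra.
have nestle k m : (k <= m)%N -> nu (sub (A m).1 (A k).1) <= (A k).2.
  move=> km; have := nest k (m - k)%N; rewrite subnKC // => h.
  by apply: le_trans h _; rewrite lerBlDr lerDl ltW.
have rmono k m : (k <= m)%N -> (A m).2 <= (A k).2.
  move=> km; have := nest k (m - k)%N; rewrite subnKC // => h.
  have := nR_ge0 (N (sub (A m).1 (A k).1)); rewrite /nu in h; lra.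
have [y Sy cy] : exists2 y, S y & forall e : K, 0 < e -> exists M,
    forall n, (M <= n)%N -> N (fun j => (A n).1 j - y j) < e.
  apply: bs_comp => // e e0.
  have [k hk'] := small_inv _ (nR_gt0 e0).
  exists k.+1 => m n Mm Mn.
  rewrite (bs_Nemb (bs_SB (Sa m) (Sa n))) (ge0_emb (ltW e0)) lte.
  have rk := rinv k; have rk2 : (F (A k, k)).2 <= k.+1%:R^-1 := rinv k.
  have [mn|nm] := leqP n m.
    have h1 := nestle n m mn; have h2 := rmono _ _ Mn.
    apply: le_lt_trans h1 _; exact: le_lt_trans (le_trans h2 rk) hk'.
  have h1 := nestle m n (ltnW nm); have h2 := rmono _ _ Mm.
  rewrite bs_symR //.
  apply: le_lt_trans h1 _; exact: le_lt_trans (le_trans h2 rk) hk'.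
have [My hMy] := pb y Sy.
pose k := (Num.trunc My).+1.
have kM : My < k%:R by exact: truncnS_gt.
have [n hn] := ball k.
have : k%:R < p n y.
  apply: hn => //.
  have r0 := rpos k.+1.
  have e0' : 0 < emb (A k.+1).2 by rewrite emb_gt0.
  have [M hM] := cy (emb (A k.+1).2) e0'.
  pose m := maxn M k.+1.
  have h1 := hM m (leq_maxl _ _).
  rewrite (bs_Nemb (bs_SB (Sa m) Sy)) lte in h1.
  have h2 := nestle k.+1 m (leq_maxr _ _).
  have h3 := bs_tri Sy (Sa k.+1) (Sa m).
  rewrite (bs_symR Sy (Sa m)) in h3.
  rewrite /nu /sub in h2 *; lra.
have := hMy n; lra.
Qed.

End BS.

Lemma normV {V : normedModType K} (v : V) : `|v| = emb (nR `|v|).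
Proof. exact: ge0_emb (normr_ge0 v). Qed.

Lemma abs_cvg (Kcauchy : forall u : nat -> K, (forall e : R, 0 < e ->
      exists N, forall n, (N <= n)%N -> nR (u N - u n) < e) -> cvgn u)
  (w : nat -> K) :
  (exists C, forall k, series (fun j => nR (w j)) k <= C) -> cvgn (series w).
Proof.
move=> [C hC]; set P := series (fun j => nR (w j)).
have Pnd : {homo P : n m / (n <= m)%N >-> n <= m}.
  by move=> n m nm; apply: nondecreasing_series => // k _ _; exact: nR_ge0.
have cP : cvgn P.
  by apply: nondecreasing_is_cvgn => //; exists C => _ [k _ <-]; exact: hC.
apply: Kcauchy => e e0.
have := cP; move/cvgrPdist_lt/(_ e e0) => [N _ hN].
exists N => n Nn.
have hn := hN N (leqnn N).
rewrite -nRN opprB sub_series Nn.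
apply: (@le_lt_trans _ _ (P n - P N)).
  rewrite /P sub_series Nn -lee.
  rewrite -normE rmorph_sum; apply: (le_trans (ler_norm_sum _ _ _)).
  by apply: ler_sum => j _; rewrite normE.
have := nondecreasing_cvgn_le Pnd cP n.
move: hn; rewrite ger0_norm; last first.
  by rewrite subr_ge0; exact: nondecreasing_cvgn_le.
lra.
Qed.

Section Main.
Variables (X : seq_class_carrier K) (Xn : seq_class_norm K)
  (E D : completeNormedModType K) (ev : D -> E -> K).
Hypotheses (HX : is_sequence_class X Xn) (Hsph : spherically_complete X Xn)
  (Hdual : is_dual ev).
Hypothesis unimod : forall z : K, exists l, `|l| = 1 /\ l * z = `|z|.
Hypothesis Kcauchy : forall u : nat -> K, (forall e : R, 0 < e ->
  exists N, forall n, (N <= n)%N -> nR (u N - u n) < e) -> cvgn u.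
Hypothesis HBK : forall (V : normedModType K) (x0 : V), exists f : V -> K,
  [/\ (forall a x y, f (a *: x + y) = a * f x + f y),
      (forall x, `|f x| <= `|x|) & f x0 = `|x0|].

Lemma evL d a x y : ev d (a *: x + y) = a * ev d x + ev d y.
Proof. by case: Hdual => h _ _ _; exact: h. Qed.
Lemma evLd a d d' x : ev (a *: d + d') x = a * ev d x + ev d' x.
Proof. by case: Hdual => _ h _ _; exact: h. Qed.
Lemma evnorm d : is_lub [set `|ev d x| | x in [set x : E | `|x| <= 1]] `|d|.
Proof. by case: Hdual => _ _ h _; exact: h. Qed.
Lemma evall (f : E -> K) : (forall (a : K) x y, f (a *: x + y) = a * f x + f y) ->
  continuous f -> exists d, forall x, ev d x = f x.
Proof. by case: Hdual => _ _ _ h; exact: h. Qed.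

Lemma evD d x y : ev d (x + y) = ev d x + ev d y.
Proof. by have := evL d 1 x y; rewrite scale1r mul1r. Qed.
Lemma ev0 d : ev d 0 = 0.
Proof.
have h := evD d 0 0; rewrite addr0 in h.
by apply: (addrI (ev d 0)); rewrite addr0 -h.
Qed.
Lemma evZ d a x : ev d (a *: x) = a * ev d x.
Proof. by have := evL d a x 0; rewrite addr0 ev0 addr0. Qed.
Lemma evN d x : ev d (- x) = - ev d x.
Proof. by rewrite -scaleN1r evZ mulN1r. Qed.
Lemma evB d x y : ev d (x - y) = ev d x - ev d y.
Proof. by rewrite evD evN. Qed.
Lemma evDd d d' x : ev (d + d') x = ev d x + ev d' x.
Proof. by have := evLd 1 d d' x; rewrite scale1r mul1r. Qed.
Lemma ev0d x : ev 0 x = 0.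
Proof.
have h := evDd 0 0 x; rewrite addr0 in h.
by apply: (addrI (ev 0 x)); rewrite addr0 -h.
Qed.
Lemma evZd a d x : ev (a *: d) x = a * ev d x.
Proof. by have := evLd a d 0 x; rewrite addr0 ev0d addr0. Qed.
Lemma evNd d x : ev (- d) x = - ev d x.
Proof. by rewrite -scaleN1r evZd mulN1r. Qed.

Lemma evbound d x : `|ev d x| <= `|d| * `|x|.
Proof.
have [->|x0] := eqVneq x 0; first by rewrite ev0 !normr0 mulr0.
have nx0 : 0 < `|x| by rewrite normr_gt0.
pose y := `|x|^-1 *: x.
have ny : `|y| <= 1.
  by rewrite normrZ normfV normr_id mulVf // gt_eqF.
have hy : `|ev d y| <= `|d| by case: (evnorm d) => h _; apply: h; exists y.
have e : ev d x = `|x| * ev d y by rewrite /y evZ mulrA mulfV ?gt_eqF // mul1r.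
rewrite e normrM normr_id mulrC.
by apply: ler_wpM2r => //; exact: normr_ge0.
Qed.

Lemma nR_evbound d x : nR (ev d x) <= nR `|d| * nR `|x|.
Proof. by rewrite -lee rmorphM -!normV -normE; exact: evbound. Qed.

Lemma bsX : banach_subspace (X D) (Xn D). Proof. by case: (HX D). Qed.
Lemma c00X : c00 `<=` X D. Proof. by case: (HX D). Qed.
Lemma coordX phi : X D phi -> forall j, `|phi j| <= Xn D phi.
Proof. by case: (HX D) => _ _ h _; exact: h. Qed.
Lemma singX d j : Xn D (single d j) = `|d|.
Proof. by case: (HX D) => _ _ _ h; exact: h. Qed.
Lemma XsingleS d j : X D (single d j).
Proof.
apply: c00X; exists j.+1 => n jn; rewrite /single.
by case: eqP => // e; rewrite e ltnn in jn.
Qed.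

Lemma nR_coord phi j : X D phi -> nR `|phi j| <= nR (Xn D phi).
Proof.
move=> Xphi; rewrite -lee -normV -(bs_Nemb bsX Xphi); exact: coordX.
Qed.

Definition ps (x : nat -> E) (phi : nat -> D) : nat -> R :=
  series (fun j => nR (ev (phi j) (x j))).
Definition val x phi := limn (ps x phi).

Lemma ps_nd x phi : {homo ps x phi : n m / (n <= m)%N >-> n <= m}.
Proof.
by move=> n m nm; apply: nondecreasing_series => // k _ _; exact: nR_ge0.
Qed.

Lemma absconv {x phi} : Xdual X ev x -> X D phi ->
  [/\ cvgn (ps x phi), cvgn (series (fun j => `|ev (phi j) (x j)|)) &
      limn (series (fun j => `|ev (phi j) (x j)|)) = emb (val x phi)].
Proof.
move=> Xx Xphi.
have [l hl] := choice (fun j => unimod (ev (phi j) (x j))).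
pose psi := fun j => l j *: phi j.
have [Xpsi _] := Hsph D phi l Xphi (fun j => (hl j).1).
have cv := Xx psi Xpsi.
have e1 : (fun j => ev (psi j) (x j)) = emb \o (fun j => nR (ev (phi j) (x j))).
  by apply/funext => j; rewrite /psi /= evZd (hl j).2 normE.
have e2 : (fun j => `|ev (phi j) (x j)|) = emb \o (fun j => nR (ev (phi j) (x j))).
  by apply/funext => j; rewrite /= normE.
rewrite e1 emb_series in cv.
have [L [hL _]] := emb_cvg_inv cv.
have cps : cvgn (ps x phi) by rewrite /ps; exact: cvgP hL.
rewrite e2 emb_series.
have h := emb_cvg cps.
split; [exact: cps|exact: (cvgP _ h)|].
exact: (cvg_lim (@norm_hausdorff _ _) h).
Qed.

Lemma ps_le_val {x phi} n : Xdual X ev x -> X D phi -> ps x phi n <= val x phi.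
Proof.
move=> Xx Xphi; have [c _ _] := absconv Xx Xphi.
exact: nondecreasing_cvgn_le (@ps_nd x phi) c n.
Qed.

Lemma val_le {x phi t} : Xdual X ev x -> X D phi -> (forall n, ps x phi n <= t) ->
  val x phi <= t.
Proof.
move=> Xx Xphi h; have [c _ _] := absconv Xx Xphi.
by apply: limr_le => //; apply: nearW.
Qed.

Definition ball1 := [set phi : nat -> D | X D phi /\ nR (Xn D phi) <= 1].

Lemma ball1_0 : ball1 (fun _ => 0).
Proof. by split; [exact: bs_S0 bsX|rewrite (bs_NS0 bsX) nR0 ler01]. Qed.

Lemma ps0 x n : ps x (fun _ => 0) n = 0.
Proof. by rewrite /ps /series /= big1 // => j _; rewrite ev0d nR0. Qed.

Lemma val0 {x} : Xdual X ev x -> val x (fun _ => 0) = 0.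
Proof.
move=> Xx; apply/le_anti; apply/andP; split.
  by apply: val_le => // [|n]; [exact: bs_S0 bsX|rewrite ps0].
by rewrite -(ps0 x 0); apply: ps_le_val => //; exact: bs_S0 bsX.
Qed.

Lemma bounded {x} : Xdual X ev x -> exists C, forall phi, ball1 phi -> val x phi <= C.
Proof.
move=> Xx.
pose p := fun n phi => ps x phi n.
pose c := fun n => \sum_(0 <= j < n) nR `|x j|.
have h1 : forall n f g, X D f -> X D g -> p n (fun j => f j + g j) <= p n f + p n g.
  move=> n f g Xf Xg; rewrite /p /ps /series /= -big_split /=; apply: ler_sum => j _.
  by rewrite evDd; exact: nRD.
have h2 : forall n f, X D f -> p n (fun j => - f j) = p n f.
  move=> n f Xf; rewrite /p /ps /series /=; apply: eq_bigr => j _.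
  by rewrite evNd nRN.
have h3 : forall n (t : R) f, X D f -> p n (fun j => emb t *: f j) = `|t| * p n f.
  move=> n t f Xf; rewrite /p /ps /series /= mulr_sumr; apply: eq_bigr => j _.
  by rewrite evZd nRM nR_emb.
have h4 : forall n f, X D f -> p n f <= c n * nR (Xn D f).
  move=> n f Xf; rewrite /p /c /ps /series /= mulr_suml; apply: ler_sum => j _.
  apply: (le_trans (nR_evbound _ _)); rewrite mulrC.
  by apply: ler_wpM2l; [exact: nR_ge0|exact: nR_coord].
have h5 : forall f, X D f -> exists M, forall n, p n f <= M.
  move=> f Xf; exists (val x f) => n; exact: ps_le_val.
have [C hC] := UB bsX p c h1 h2 h3 h4 h5.
exists C => phi [Xphi nphi]; apply: val_le => // n; exact: hC.
Qed.

Definition nu x := sup [set val x phi | phi in ball1].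

Lemma nu_has {x} : Xdual X ev x -> has_sup [set val x phi | phi in ball1].
Proof.
move=> Xx; split; first by exists (val x (fun _ => 0)), (fun _ => 0) => //; exact: ball1_0.
by have [C hC] := bounded Xx; exists C => _ [phi bphi <-]; exact: hC.
Qed.

Lemma nu_ub {x phi} : Xdual X ev x -> ball1 phi -> val x phi <= nu x.
Proof. by move=> Xx bphi; apply: sup_upper_bound; [exact: nu_has|exists phi]. Qed.

Lemma nu_le {x t} : Xdual X ev x -> (forall phi, ball1 phi -> val x phi <= t) ->
  nu x <= t.
Proof.
move=> Xx h; apply: ge_sup; first by exact: (nu_has Xx).1.
by move=> _ [phi bphi <-]; exact: h.
Qed.

Lemma nu_ge0 {x} : Xdual X ev x -> 0 <= nu x.
Proof. by move=> Xx; rewrite -(val0 Xx); apply: nu_ub => //; exact: ball1_0. Qed.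

Lemma nu_lub {x} : Xdual X ev x -> is_lub (dual_sums X Xn ev x) (emb (nu x)).
Proof.
move=> Xx; split.
  move=> _ [phi [Xphi nphi] <-].
  have [_ _ ->] := absconv Xx Xphi; rewrite lee; apply: nu_ub => //.
  by split => //; rewrite -lee -(bs_Nemb bsX Xphi) rmorph1.
move=> t ht.
have t0 : 0 <= t.
  have := ht (emb (val x (fun _ => 0))); rewrite val0 // rmorph0; apply.
  exists (fun _ => 0); first by split; [exact: bs_S0 bsX|rewrite (bs_NS0 bsX) ler01].
  have [_ _ ->] := absconv Xx (bs_S0 bsX); by rewrite (val0 Xx) rmorph0.
rewrite (ge0_emb t0) lee; apply: nu_le => // phi [Xphi nphi].
rewrite -lee -(ge0_emb t0); apply: ht; exists phi.
  by split => //; rewrite (bs_Nemb bsX Xphi) -(rmorph1 emb) lee.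
by have [_ _ ->] := absconv Xx Xphi.
Qed.

Lemma lub_uniq (A : set K) s s' : is_lub A s -> is_lub A s' -> s = s'.
Proof.
move=> [h1 h2] [h1' h2']; apply/le_anti; apply/andP; split.
  exact: h2. exact: h2'.
Qed.

Lemma dn_eq {x} : Xdual X ev x -> dual_norm X Xn ev x = emb (nu x).
Proof.
move=> Xx; rewrite /dual_norm; case: pselect => [h|nh].
  by case: cid => s /= hs; exact: lub_uniq hs (nu_lub Xx).
by exfalso; apply: nh; exists (emb (nu x)); exact: nu_lub.
Qed.

Lemma Xd0 : Xdual X ev (fun _ => 0).
Proof.
move=> phi Xphi.
have -> : (fun j => ev (phi j) 0) = (fun _ => 0) by apply/funext => j; rewrite ev0.
have -> : series (fun _ : nat => (0 : K)) = (fun _ => 0).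
  by apply/funext => n; rewrite /series /= big1.
exact: (cvgP _ (cvg_cst _)).
Qed.

Lemma XdD {x y} : Xdual X ev x -> Xdual X ev y -> Xdual X ev (fun j => x j + y j).
Proof.
move=> Xx Xy phi Xphi.
have -> : (fun j => ev (phi j) (x j + y j)) =
    (fun j => ev (phi j) (x j)) + (fun j => ev (phi j) (y j)).
  by apply/funext => j /=; rewrite evD.
by rewrite seriesD; apply: is_cvgD; [exact: Xx|exact: Xy].
Qed.

Lemma XdZ a {x} : Xdual X ev x -> Xdual X ev (fun j => a *: x j).
Proof.
move=> Xx phi Xphi.
have -> : (fun j => ev (phi j) (a *: x j)) = a *: (fun j => ev (phi j) (x j)).
  by apply/funext => j /=; rewrite evZ.
by rewrite seriesZ; apply: is_cvgZr; exact: Xx.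
Qed.

Lemma XdB {x y} : Xdual X ev x -> Xdual X ev y -> Xdual X ev (fun j => x j - y j).
Proof.
move=> Xx Xy; have := XdD Xx (XdZ (-1) Xy).
by congr (Xdual _ _ _); apply/funext => j; rewrite scaleN1r.
Qed.

Lemma lin_cont (f : E -> K) : (forall a x y, f (a *: x + y) = a * f x + f y) ->
  (forall x, `|f x| <= `|x|) -> continuous f.
Proof.
move=> lin bnd.
have fD u v : f (u + v) = f u + f v by rewrite -[u in LHS]scale1r lin mul1r.
have f0 : f 0 = 0.
  have h := fD 0 0; rewrite addr0 in h.
  by apply: (addrI (f 0)); rewrite addr0 -h.
have fN u : f (- u) = - f u by rewrite -scaleN1r -[_ *: u]addr0 lin f0 addr0 mulN1r.
have fB u v : f u - f v = f (u - v) by rewrite fD fN.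
move=> z; apply/cvgrPdist_lt => e e0.
near=> w; rewrite fB; apply: le_lt_trans (bnd _) _.
near: w; exact: (@cvgr_dist_lt _ _ _ (nbhs z) _ (fun w : E => w) z cvg_id e e0).
Unshelve. all: by end_near.
Qed.

Lemma coord_le {x} j : Xdual X ev x -> nR `|x j| <= nu x.
Proof.
move=> Xx.
have [f [lin bnd fx]] := HBK _ (x j).
have [d hd] := evall f lin (lin_cont f lin bnd).
have nd : `|d| <= 1.
  case: (evnorm d) => _; apply => _ [y /= hy <-].
  by rewrite hd; apply: le_trans (bnd y) hy.
have bphi : ball1 (single d j).
  split; first exact: XsingleS.
  by rewrite singX -nR_ler rmorph1 normr_id.
have e : ps x (single d j) j.+1 = nR `|x j|.
  rewrite /ps /series /= big_nat_recr //= /single eqxx big_nat_cond big1 ?add0r.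
    by rewrite hd fx.
  move=> i /andP[/andP[_ ij] _]; by rewrite (ltn_eqF ij) ev0d nR0.
rewrite -e; apply: le_trans (ps_le_val _ Xx (XsingleS d j)) _.
exact: nu_ub.
Qed.

Lemma nu_def {x} : Xdual X ev x -> nu x = 0 -> x = (fun _ => 0).
Proof.
move=> Xx h; apply/funext => j; have := coord_le j Xx; rewrite h => h'.
have : nR `|x j| = 0 by apply/le_anti; rewrite h' nR_ge0.
by move/nR_eq0/normr0_eq0.
Qed.

Lemma ps_D x y phi n :
  ps (fun j => x j + y j) phi n <= ps x phi n + ps y phi n.
Proof.
rewrite /ps /series /= -big_split /=; apply: ler_sum => j _.
by rewrite evD; exact: nRD.
Qed.

Lemma nu_tri {x y} : Xdual X ev x -> Xdual X ev y ->
  nu (fun j => x j + y j) <= nu x + nu y.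
Proof.
move=> Xx Xy; apply: nu_le; first exact: XdD.
move=> phi bphi; have [Xphi _] := bphi.
apply: val_le => //; first exact: XdD.
move=> n; apply: le_trans (ps_D _ _ _ _) _.
by apply: lerD; apply: le_trans (ps_le_val _ _ Xphi) (nu_ub _ bphi).
Qed.

Lemma ps_Z a x phi n : ps (fun j => a *: x j) phi n = nR a * ps x phi n.
Proof.
rewrite /ps /series /= mulr_sumr; apply: eq_bigr => j _.
by rewrite evZ nRM.
Qed.

Lemma nu_hom a {x} : Xdual X ev x -> nu (fun j => a *: x j) = nR a * nu x.
Proof.
move=> Xx; have Xax := XdZ a Xx.
have c0 := nR_ge0 a.
apply/le_anti; apply/andP; split.
  apply: nu_le => // phi bphi; have [Xphi _] := bphi.
  apply: val_le => // n; rewrite ps_Z; apply: ler_wpM2l => //.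
  by apply: le_trans (ps_le_val _ Xx Xphi) (nu_ub Xx bphi).
have [->|cn0] := eqVneq (nR a) 0; first by rewrite mul0r; exact: nu_ge0.
have cp : 0 < nR a by rewrite lt_def cn0.
rewrite mulrC -ler_pdivlMr //; apply: nu_le => // phi bphi; have [Xphi _] := bphi.
apply: val_le => // n; rewrite ler_pdivlMr // mulrC -ps_Z.
by apply: le_trans (ps_le_val _ Xax Xphi) (nu_ub Xax bphi).
Qed.

Lemma Xd_complete (s : nat -> (nat -> E)) : (forall n, Xdual X ev (s n)) ->
  (forall e : K, 0 < e -> exists M, forall m n, (M <= m)%N -> (M <= n)%N ->
     dual_norm X Xn ev (fun j => s m j - s n j) < e) ->
  exists2 y, Xdual X ev y & forall e : K, 0 < e -> exists M, forall n, (M <= n)%N ->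
     dual_norm X Xn ev (fun j => s n j - y j) < e.
Proof.
move=> Xs hC.
have XsB m n : Xdual X ev (fun j => s m j - s n j) := XdB (Xs m) (Xs n).
have hCR : forall e : R, 0 < e -> exists M, forall m n, (M <= m)%N -> (M <= n)%N ->
    nu (fun j => s m j - s n j) < e.
  move=> e e0; have e0' : 0 < emb e by rewrite emb_gt0.
  have [M hM] := hC (emb e) e0'; exists M => m n Mm Mn.
  by have := hM m n Mm Mn; rewrite dn_eq // lte.
have cj : forall j, cvgn (fun n => s n j).
  move=> j; apply: seq_cauchy_cvg => e e0; have [M hM] := hC e e0.
  exists M => n Mn; apply: le_lt_trans (hM M n (leqnn M) Mn).
  rewrite dn_eq // normV lee; exact: (coord_le j (XsB M n)).
pose y := fun j => limn (fun n => s n j).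
have ys : forall j, (fun n => s n j) @ \oo --> y j := cj.
have KE : forall e : R, 0 < e -> exists M, forall n, (M <= n)%N ->
    forall phi, ball1 phi -> forall k, ps (fun j => s n j - y j) phi k <= e.
  move=> e e0; have [M hM] := hCR e e0; exists M => n Mn phi bphi k.
  have [Xphi nphi] := bphi.
  apply/ler_addgt0Pr => dl dl0.
  pose dl' := dl / k.+1%:R.
  have dl'0 : 0 < dl' by rewrite divr_gt0 // ltr0n.
  have ev1 : \forall m \near \oo, forall i : 'I_k, nR `|y i - s m i| < dl'.
    apply: filter_forall => i; exact: (cvgVP (fun n => s n i) (y i)).1 (ys i) dl' dl'0.
  have [N _ hN] := ev1.
  pose m := maxn N M.
  have hm : forall i : 'I_k, nR `|y i - s m i| < dl' := hN m (leq_maxl N M).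
  have h1 : ps (fun j => s n j - y j) phi k <=
      ps (fun j => s n j - s m j) phi k + \sum_(0 <= i < k) nR (ev (phi i) (s m i - y i)).
    rewrite /ps /series /= -big_split /=; apply: ler_sum => j _.
    rewrite (_ : s n j - y j = (s n j - s m j) + (s m j - y j)); last first.
      by rewrite addrA subrK.
    by rewrite evD; exact: nRD.
  have h2 : ps (fun j => s n j - s m j) phi k <= nu (fun j => s n j - s m j).
    by apply: le_trans (ps_le_val _ (XsB n m) Xphi) (nu_ub (XsB n m) bphi).
  have h3 := hM n m Mn (leq_maxr N M).
  have h4 : \sum_(0 <= i < k) nR (ev (phi i) (s m i - y i)) <= \sum_(i < k) dl'.
    rewrite big_mkord; apply: ler_sum => i _; apply: le_trans (nR_evbound _ _) _.
    have := nR_coord phi i Xphi; have := hm i; rewrite -normrN opprB => h h'.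
    have := nR_ge0 `|s m i - y i|; have := nR_ge0 `|phi i|; nra.
  have h5 : \sum_(i < k) dl' <= dl.
    rewrite sumr_const card_ord -mulr_natl mulrA ler_pdivrMr ?ltr0n //.
    by rewrite mulrC ler_pM2l // ler_nat.
  lra.
have Xy : Xdual X ev y.
  move=> phi Xphi.
  pose c := nR (Xn D phi) + 1.
  have c0 : 0 < c by rewrite /c ltr_pwDr // nR_ge0.
  pose phi' := fun j => emb c^-1 *: phi j.
  have Xphi' : X D phi' := bs_SZ bsX (emb c^-1) Xphi.
  have bphi' : ball1 phi'.
    split => //; rewrite (bs_NembZ bsX _ Xphi) gtr0_norm ?invr_gt0 //.
    by rewrite ler_pdivrMl // mulr1 /c lerDl.
  have [M hM] := KE 1 ltr01.
  pose w := fun j => ev (phi j) (s M j - y j).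
  have cw : cvgn (series w).
    apply: (abs_cvg Kcauchy); exists c => k.
    have := hM M (leqnn M) phi' bphi' k.
    have -> : ps (fun j => s M j - y j) phi' k =
        c^-1 * series (fun j => nR (w j)) k.
      rewrite /ps /series /= mulr_sumr; apply: eq_bigr => j _.
      by rewrite /phi' /w evZd nRM nR_emb gtr0_norm // invr_gt0.
    by rewrite ler_pdivrMl // mulr1.
  have -> : (fun j => ev (phi j) (y j)) = (fun j => ev (phi j) (s M j)) - w.
    apply/funext => j; rewrite /w.
    change (ev (phi j) (y j) = ev (phi j) (s M j) - ev (phi j) (s M j - y j)).
    by rewrite evB opprB addrC subrK.
  by rewrite seriesD seriesN; apply: is_cvgB => //; exact: Xs.
exists y => // e e0.
have e'0 : 0 < nR e / 2 by rewrite divr_gt0 // nR_gt0.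
have [M hM] := KE _ e'0; exists M => n Mn.
have XB : Xdual X ev (fun j => s n j - y j) := XdB (Xs n) Xy.
rewrite dn_eq // (ge0_emb (ltW e0)) lte.
have : nu (fun j => s n j - y j) <= nR e / 2.
  apply: nu_le => // phi bphi; have [Xphi _] := bphi.
  by apply: val_le => // k; exact: hM.
have := nR_gt0 e0; lra.
Qed.

Theorem gen_main :
  [/\ (forall x, Xdual X ev x ->
         (forall phi : nat -> D, X D phi -> Xn D phi <= 1 ->
            cvgn (series (fun j => `|ev (phi j) (x j)|))) /\
         exists s, is_lub (dual_sums X Xn ev x) s),
      banach_subspace (Xdual X ev) (dual_norm X Xn ev) &
      (forall x, Xdual X ev x -> forall j, `|x j| <= dual_norm X Xn ev x)].
Proof.
split.
- move=> x Xx; split; last by exists (emb (nu x)); exact: nu_lub.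
  by move=> phi Xphi _; have [] := absconv Xx Xphi.
- split; first exact: Xd0.
  split; first by move=> x y; exact: XdD.
  split; first by move=> a x; exact: XdZ.
  split; first by move=> x Xx; rewrite dn_eq // emb_ge0; exact: nu_ge0.
  split.
    move=> x Xx; rewrite dn_eq // -(rmorph0 emb) => /emb_inj; exact: nu_def.
  split.
    move=> x y Xx Xy; rewrite !dn_eq //; last exact: XdD.
    by rewrite -rmorphD lee; exact: nu_tri.
  split.
    move=> a x Xx; rewrite !dn_eq //; last exact: XdZ.
    by rewrite nu_hom // rmorphM -normE.
  exact: Xd_complete.
- move=> x Xx j; rewrite dn_eq // normV lee; exact: coord_le.
Qed.

End Main.
End Gen.

Section RealCase.
Variable R : realType.

Lemma HB_real (V : normedModType R) (x0 : V) : exists f : V -> R,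
  [/\ (forall a x y, f (a *: x + y) = a * f x + f y),
      (forall x, `|f x| <= `|x|) & f x0 = `|x0|].
Proof.
have [g [gD gZ gp gx]] := @real_HB R V (fun r x => r *: x)
  (fun r x y => scalerDr r x y) (fun r s x => scalerDl x r s)
  (fun r s x => scalerA r s x) (fun x => scale1r x)
  (fun x => `|x|) (fun x y => ler_normD x y) (fun r x => normrZ r x) x0.
exists g; split => //.
- by move=> a x y; rewrite gD gZ.
- move=> x; rewrite ler_norml gp andbT.
  have := gp (- x); rewrite normrN -scaleN1r gZ mulN1r.
  by rewrite lerNl.
Qed.

Lemma unimod_real (z : R) : exists l : R, `|l| = 1 /\ l * z = `|z|.
Proof.
have [z0|z0] := leP 0 z.
  by exists 1; rewrite normr1 mul1r ger0_norm.
by exists (-1); rewrite normrN normr1 mulN1r ltr0_norm.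
Qed.

Lemma real_main (X : seq_class_carrier R) (Xn : seq_class_norm R)
  (HX : is_sequence_class X Xn) (Hsph : spherically_complete X Xn)
  (E D : completeNormedModType R) (ev : D -> E -> R) (Hdual : is_dual ev) :
  [/\ (forall x, Xdual X ev x ->
         (forall phi : nat -> D, X D phi -> Xn D phi <= 1 ->
            cvgn (series (fun j => `|ev (phi j) (x j)|))) /\
         exists s, is_lub (dual_sums X Xn ev x) s),
      banach_subspace (Xdual X ev) (dual_norm X Xn ev) &
      (forall x, Xdual X ev x -> forall j, `|x j| <= dual_norm X Xn ev x)].
Proof.
have Kc : forall u : nat -> R, (forall e : R, 0 < e ->
    exists N, forall n, (N <= n)%N -> `|u N - u n| < e) -> cvgn u.
  by move=> u hu; apply: seq_cauchy_cvg => e e0; exact: hu.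
have := @gen_main R R idfun (fun r s => erefl) (fun z => `|z|) (fun z => erefl).
move=> /(_ (fun r => erefl) X Xn E D ev HX Hsph Hdual unimod_real Kc HB_real).
done.
Qed.

End RealCase.

Section ComplexCase.
Variable R : realType.
Local Open Scope complex_scope.

Definition nC (z : R[i]) : R := complex.Re `|z|.

Lemma normC_re (z : R[i]) : `|z| = (nC z)%:C.
Proof. by rewrite /nC normc_def. Qed.

Lemma normCR (r : R) : `|r%:C| = `|r|%:C.
Proof. by rewrite normc_def /= expr0n addr0 sqrtr_sqr. Qed.

Lemma nC_ge0 z : 0 <= nC z.
Proof. by rewrite -ler0c -normC_re. Qed.

Lemma sqn (z : R[i]) : nC z ^+ 2 = complex.Re z ^+ 2 + complex.Im z ^+ 2.
Proof.
have h := add_Re2_Im2 z; rewrite normC_re -rmorphXn in h.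
by apply: complexI; rewrite h.
Qed.

Lemma Re_le z : `|complex.Re z| <= nC z.
Proof.
have := sqn z; have := nC_ge0 z; have := normr_ge0 (complex.Re z).
have := real_normK (num_real (complex.Re z)); nra.
Qed.

Lemma Im_le z : `|complex.Im z| <= nC z.
Proof.
have := sqn z; have := nC_ge0 z; have := normr_ge0 (complex.Im z).
have := real_normK (num_real (complex.Im z)); nra.
Qed.

Lemma nC_le z : nC z <= `|complex.Re z| + `|complex.Im z|.
Proof.
have := sqn z; have := nC_ge0 z; have := normr_ge0 (complex.Im z).
have := normr_ge0 (complex.Re z).
have := real_normK (num_real (complex.Im z)); have := real_normK (num_real (complex.Re z)); nra.
Qed.

Lemma unimod_c (z : R[i]) : exists l : R[i], `|l| = 1 /\ l * z = `|z|.
Proof.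
have [->|z0] := eqVneq z 0; first by exists 1; rewrite normr1 mul1r normr0.
exists (`|z| / z); split; last by rewrite mulfVK.
by rewrite normrM normfV normr_id mulfV // normr_eq0.
Qed.

Lemma Kcauchy_c (u : nat -> scal R true) : (forall e : R, 0 < e ->
    exists N, forall n, (N <= n)%N -> nC (u N - u n) < e) -> cvgn u.
Proof.
move=> hu.
have cre : cvgn (fun n => complex.Re (u n)).
  apply: seq_cauchy_cvg => e e0; have [N hN] := hu e e0; exists N => n Nn.
  apply: le_lt_trans (hN n Nn); apply: le_trans (Re_le _).
  by case: (u N) => a b; case: (u n) => c d.
have cim : cvgn (fun n => complex.Im (u n)).
  apply: seq_cauchy_cvg => e e0; have [N hN] := hu e e0; exists N => n Nn.
  apply: le_lt_trans (hN n Nn); apply: le_trans (Im_le _).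
  by case: (u N) => a b; case: (u n) => c d.
pose l : scal R true := limn (fun n => complex.Re (u n)) +i* limn (fun n => complex.Im (u n)).
apply: (cvgP l).
apply/(@cvgKP R (scal R true) (real_complex R) (@lecR R) nC normC_re normCR) => e e0.
have e20 : 0 < e / 2 by rewrite divr_gt0.
move/cvgrPdist_lt: cre => /(_ _ e20) cre.
move/cvgrPdist_lt: cim => /(_ _ e20) cim.
near=> n.
apply: le_lt_trans (nC_le _) _.
have h1 : `|limn (fun n => complex.Re (u n)) - complex.Re (u n)| < e / 2.
  by near: n.
have h2 : `|limn (fun n => complex.Im (u n)) - complex.Im (u n)| < e / 2.
  by near: n.
move: h1 h2; case: (u n) => a b /= h1 h2; lra.
Unshelve. all: by end_near.
Qed.

Lemma HB_c (V : normedModType R[i]) (x0 : V) : exists f : V -> R[i],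
  [/\ (forall a x y, f (a *: x + y) = a * f x + f y),
      (forall x, `|f x| <= `|x|) & f x0 = `|x0|].
Proof.
pose p (x : V) := nC `|x|.
have pE x : `|x| = (p x)%:C by rewrite /p -normC_re normr_id.
have pD : forall x y, p (x + y) <= p x + p y.
  move=> x y; rewrite -lecR (_ : (p x + p y)%:C = (p x)%:C + (p y)%:C); last by simpc.
  by rewrite -!pE; exact: ler_normD.
have pZ : forall r x, p (r%:C *: x) = `|r| * p x.
  by move=> r x; apply: complexI; rewrite -pE normrZ normCR pE; simpc.
have [g [gD gZ gp gx]] := @real_HB R V (fun r x => r%:C *: x)
  (fun r x y => scalerDr _ x y)
  (fun r s x => etrans (congr1 (fun c => c *: x) (rmorphD _ r s)) (scalerDl x _ _))
  (fun r s x => etrans (scalerA _ _ x) (congr1 (fun c => c *: x) (esym (rmorphM _ r s))))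
  (fun x => etrans (congr1 (fun c => c *: x) (rmorph1 _)) (scale1r x))
  p pD pZ x0.
pose f x := (g x)%:C - 'i * (g ('i *: x))%:C.
have fD x y : f (x + y) = f x + f y.
  by rewrite /f scalerDr !gD !rmorphD mulrDr opprD addrACA.
have gZ' : forall r x, g (r%:C *: x) = r * g x := gZ.
have fR r x : f (r%:C *: x) = r%:C * f x.
  have e : 'i *: (r%:C *: x) = r%:C *: ('i *: x) by rewrite !scalerA mulrC.
  by rewrite /f e !gZ'; simpc.
have gN x : g (- x) = - g x.
  by have := gZ (-1) x; rewrite rmorphN1 scaleN1r mulN1r.
have fi x : f ('i *: x) = 'i * f x.
  have e2 : 'i *: ('i *: x) = - x by rewrite scalerA -expr2 sqr_i scaleN1r.
  by rewrite /f e2 gN; simpc.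
have lin a x y : f (a *: x + y) = a * f x + f y.
  rewrite fD; congr (_ + _).
  have ea := complexE a.
  move: ea; set ra := complex.Re a; set ia := complex.Im a => ea.
  rewrite ea scalerDl -scalerA fD fR fi fR.
  by rewrite mulrDl mulrA.
have f0 : f 0 = 0.
  by have h := fD 0 0; rewrite addr0 in h; apply: (addrI (f 0)); rewrite addr0 -h.
have fl l x : f (l *: x) = l * f x by rewrite -[l *: x]addr0 lin f0 addr0.
have Ref x : complex.Re (f x) = g x.
  by rewrite /f; simpc.
have Imf x : complex.Im (f x) = - g ('i *: x).
  by rewrite /f; simpc.
have bnd x : `|f x| <= `|x|.
  have [l [l1 lf]] := unimod_c (f x).
  have : nC (f x) <= p x.
    rewrite /nC -lf -fl Ref; apply: le_trans (gp _) _.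
    by rewrite /p normrZ l1 mul1r.
  by rewrite normC_re pE lecR.
exists f; split => //.
have hb := bnd x0; rewrite normC_re pE lecR in hb.
have hs := sqn (f x0); rewrite Ref Imf gx in hs.
have hn := nC_ge0 (f x0).
have p0 : 0 <= p x0 by rewrite /p; exact: nC_ge0.
have t0 : g ('i *: x0) = 0.
  apply/eqP; rewrite -sqrf_eq0 eq_le sqr_ge0 andbT.
  rewrite sqrrN in hs; nra.
by rewrite /f t0 mulr0 subr0 gx pE.
Qed.

Lemma complex_main (X : seq_class_carrier (scal R true)) (Xn : seq_class_norm (scal R true))
  (HX : is_sequence_class X Xn) (Hsph : spherically_complete X Xn)
  (E D : completeNormedModType (scal R true)) (ev : D -> E -> scal R true) (Hdual : is_dual ev) :
  [/\ (forall x, Xdual X ev x ->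
         (forall phi : nat -> D, X D phi -> Xn D phi <= 1 ->
            cvgn (series (fun j => `|ev (phi j) (x j)|))) /\
         exists s, is_lub (dual_sums X Xn ev x) s),
      banach_subspace (Xdual X ev) (dual_norm X Xn ev) &
      (forall x, Xdual X ev x -> forall j, `|x j| <= dual_norm X Xn ev x)].
Proof.
exact: (@gen_main R (scal R true) (real_complex R) (@lecR R) nC normC_re normCR
  X Xn E D ev HX Hsph Hdual unimod_c Kcauchy_c HB_c).
Qed.

End ComplexCase.

Theorem proposition2p4 (R : realType) (b : bool)
  (X : seq_class_carrier (scal R b)) (Xn : seq_class_norm (scal R b))
  (HX : is_sequence_class X Xn) (Hsph : spherically_complete X Xn)
  (E D : completeNormedModType (scal R b)) (ev : D -> E -> scal R b)
  (Hdual : is_dual ev) :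
  [/\ (forall x, Xdual X ev x ->
         (forall phi : nat -> D, X D phi -> Xn D phi <= 1 ->
            cvgn (series (fun j => `|ev (phi j) (x j)|))) /\
         exists s, is_lub (dual_sums X Xn ev x) s),
      banach_subspace (Xdual X ev) (dual_norm X Xn ev) &
      (forall x, Xdual X ev x -> forall j, `|x j| <= dual_norm X Xn ev x)].
Proof.
destruct b.
  exact: complex_main.
exact: real_main.
Qed.
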